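(* Let $\gamma\in(0,1)$, $\mu\in(0,\infty)\setminus\{1\}$. Let $g$ be a concave traveling wave with compact nonempty support, normalized so that its support is $[L,0]$. Let $s=\sup\{\xi:\sup_x\Phi_\xi[g](x)\ge\gamma\}$, and let $d$ be as in the context. Then for all $x\ge L$: $$\Phi_s[g](x)=\begin{cases}1-\gamma-x-\mu(s-x)_+ & \text{if } x>0,\\ 1-\gamma+g(x)-\mu(s-x)_+ & \text{if } d\le x\le 0,\\ 1-\gamma+g(d)-(d-x)-\mu(s-x)_+ & \text{if } x<d.\end{cases}$$
   Context: Let $\pi(x)=x$ if $x\ge0$ and $\pi(x)=-\infty$ otherwise. Write $x_+=\max(x,0)$ and use $\sup\emptyset=-\infty$. Define $\Phi_\xi[h](x)=1-\gamma-\mu(\xi-x)_++\sup_y(h(y)-|x-y|)$. The dynamics is defined for $n\ge1$ by: - $p_n(x)=\pi[1-\gamma+\sup_y(g_{n-1}(y)-\min(1,\mu)(x-y)_+)]$; - $s_n=\sup\{x:p_n(x)\ge\gamma\}$; - $g_n=\pi\circ\Phi_{s_n}[g_{n-1}]$. A traveling wave with speed $v$ is a $g$ with $g_0=g\Rightarrow g_n(x)=g(x-nv)$ for all $n,x$. The support is $\{g\ge0\}$ and $L=\inf\{x:g(x)>0\}$. Definition of $d$: if the a.e. derivative $g'$ satisfies $g'>1$ somewhere on $(L,0)$, then $d<0$ is the unique point with $g'>1$ on $(L,d)$ and $g'\le1$ on $(d,\infty)$. Otherwise $d:=L$. *)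

(* Defs.v *)
(* functions R -> \bar R (values in R ∪ {-oo}). *)
From HB Require Import structures.
From mathcomp Require Import all_boot all_order all_algebra.
From mathcomp Require Import all_classical all_reals all_analysis.
Set Implicit Arguments. Unset Strict Implicit. Unset Printing Implicit Defensive.
Import Order.TTheory GRing.Theory Num.Theory.
Local Open Scope classical_set_scope.
Local Open Scope ring_scope.

Section Defs.
Variable R : realType.

Definition piE (e : \bar R) : \bar R := if (0 <= e)%E then e else -oo%E.

(* Phi_xi[h](x) = 1 - gamma - mu (xi - x)_+ + sup_y (h y - |x - y|) ;
   xi is allowed to be an extended real (the s_n may a priori be infinite). *)
Definition Phi (gamma mu : R) (xi : \bar R) (h : R -> \bar R) (x : R) : \bar R :=
  (((1 - gamma)%:E - mu%:E * maxe (xi - x%:E) 0%E)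
   + ereal_sup [set (h y - `|x - y|%:E)%E | y in [set: R]])%E.

Definition pfun (gamma mu : R) (h : R -> \bar R) (x : R) : \bar R :=
  piE ((1 - gamma)%:E
       + ereal_sup [set (h y - (Num.min 1 mu * Num.max (x - y) 0)%:E)%E
                   | y in [set: R]])%E.

Definition s_of (gamma mu : R) (h : R -> \bar R) : \bar R :=
  ereal_sup [set x%:E | x in [set x : R | (gamma%:E <= pfun gamma mu h x)%E]].

Definition step (gamma mu : R) (h : R -> \bar R) : R -> \bar R :=
  fun x => piE (Phi gamma mu (s_of gamma mu h) h x).

Definition gseq (gamma mu : R) (g : R -> \bar R) (n : nat) : R -> \bar R :=
  iter n (step gamma mu) g.

Definition traveling_wave (gamma mu : R) (g : R -> \bar R) (v : R) : Prop :=
  forall (n : nat) (x : R), gseq gamma mu g n x = g (x - n%:R * v).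

Definition concaveE (g : R -> \bar R) : Prop :=
  forall (x y t : R), (0 < t < 1)%R ->
    (t%:E * g x + (1 - t)%:E * g y <= g (t * x + (1 - t) * y)%R)%E.

Definition s_crit (gamma mu : R) (g : R -> \bar R) : \bar R :=
  ereal_sup [set xi%:E | xi in
    [set xi : R | (gamma%:E <= ereal_sup (range (Phi gamma mu xi%:E g)))%E]].

(* the point d of the context, g' being the (a.e.) derivative of g,
   taken at the points where the real function fine \o g is differentiable *)
Definition is_d (g : R -> \bar R) (L d : R) : Prop :=
  let gr := fun x => fine (g x) in
  ((exists x, L < x < 0 /\ derivable gr x 1 /\ 1 < derive1 gr x) ->
     [/\ L < d < 0,
         (forall x, L < x < d -> derivable gr x 1 -> 1 < derive1 gr x) &
         (forall x, d < x -> derivable gr x 1 -> derive1 gr x <= 1)])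
  /\ (~ (exists x, L < x < 0 /\ derivable gr x 1 /\ 1 < derive1 gr x) -> d = L).

End Defs.

(* Main.v *)
Require Import Defs.
From HB Require Import structures.
From mathcomp Require Import all_boot all_order all_algebra.
From mathcomp Require Import all_classical all_reals all_analysis.
From mathcomp Require Import ring lra.
Import Order.TTheory GRing.Theory Num.Theory numFieldNormedType.Exports.
Local Open Scope classical_set_scope.
Local Open Scope ring_scope.
Section Chord.
Variable R : realType.
Variable G : R -> R.
Variables a b : R.
Hypothesis cc : forall {x y z}, a <= x -> x < y -> y < z -> z <= b ->
  G x * (z - y) + G z * (y - x) <= G y * (z - x).

Definition sl x y := (G y - G x) / (y - x).

Lemma sl3 {x y z} : a <= x -> x < y -> y < z -> z <= b ->
  sl x z <= sl x y /\ sl y z <= sl x z.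
Proof.
move=> ax xy yz zb; have := cc ax xy yz zb.
have p0 : 0 < y - x by rewrite subr_gt0.
have q0 : 0 < z - y by rewrite subr_gt0.
have r0 : 0 < z - x by rewrite subr_gt0 (lt_trans xy).
rewrite /sl => H; split.
  by rewrite ler_pdivrMr // mulrAC ler_pdivlMr //; nra.
by rewrite ler_pdivrMr // mulrAC ler_pdivlMr //; nra.
Qed.

Lemma sl_adj {x y z} : a <= x -> x < y -> y < z -> z <= b -> sl y z <= sl x y.
Proof. by move=> ax xy yz zb; have [h1 h2] := sl3 ax xy yz zb; apply: le_trans h1. Qed.

Definition Pt (x y k : R) := x + k * ((y - x) / 6).
Definition st (x y k : R) := sl (Pt x y (k - 1)) (Pt x y k).
Definition Dq (x y : R) := sl x (x + (y - x) / 6) - sl (y - (y - x) / 6) y.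

Lemma gen_step x y k : a <= x -> x < y -> y <= b -> 1 <= k -> k <= 4 ->
  [/\ x + (y - x) / 6 <= Pt x y k, Pt x y (k + 1) <= y - (y - x) / 6,
      Pt x y (k + 1) - Pt x y k = (y - x) / 6 &
      Dq (Pt x y k) (Pt x y (k + 1)) <= st x y k - st x y (k + 2)].
Proof.
move=> ax xy yb k1 k4.
set r := (y - x) / 6.
have r0 : 0 < r by rewrite /r divr_gt0 // subr_gt0.
have yE : y = x + 6 * r by rewrite /r; field.
have e1 : Pt x y (k + 1) - Pt x y k = r by rewrite /Pt -/r; ring.
split => //.
- by rewrite /Pt -/r; nra.
- by rewrite /Pt -/r; nra.
rewrite /Dq e1 /st.
set X := Pt x y k; set Y := Pt x y (k + 1).
have XE : X = x + k * r by [].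
have YE : Y = x + k * r + r by rewrite /Y /Pt -/r; ring.
have h1 : sl X (X + r / 6) <= sl (Pt x y (k - 1)) X.
  apply: sl_adj.
  - by rewrite /Pt -/r; nra.
  - by rewrite /Pt XE -/r; nra.
  - by rewrite ltrDl divr_gt0.
  - by rewrite XE; nra.
have h2 : sl Y (Pt x y (k + 2)) <= sl (Y - r / 6) Y.
  apply: sl_adj.
  - by rewrite YE; nra.
  - by rewrite ltrBlDr ltrDl divr_gt0.
  - by rewrite YE /Pt -/r; nra.
  - by rewrite /Pt -/r; nra.
have -> : k + 2 - 1 = k + 1 by ring.
lra.
Qed.

Definition nxt (br : R * R) : R * R :=
  let x := br.1 in let y := br.2 in
  if st x y 1 - st x y 3 <= Dq x y / 2 then (Pt x y 1, Pt x y 2)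
  else if st x y 2 - st x y 4 <= Dq x y / 2 then (Pt x y 2, Pt x y 3)
  else if st x y 3 - st x y 5 <= Dq x y / 2 then (Pt x y 3, Pt x y 4)
  else (Pt x y 4, Pt x y 5).

Lemma nxt_spec {x y} : a <= x -> x < y -> y <= b ->
  [/\ x + (y - x) / 6 <= (nxt (x, y)).1, (nxt (x, y)).2 <= y - (y - x) / 6,
      (nxt (x, y)).2 - (nxt (x, y)).1 = (y - x) / 6 &
      Dq (nxt (x, y)).1 (nxt (x, y)).2 <= Dq x y / 2].
Proof.
move=> ax xy yb.
set r := (y - x) / 6.
have r0 : 0 < r by rewrite /r divr_gt0 // subr_gt0.
have yE : y = x + 6 * r by rewrite /r; field.
have P0 : Pt x y (1 - 1) = x by rewrite /Pt; ring.
have P1 : Pt x y 1 = x + r by rewrite /Pt -/r; ring.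
have P5 : Pt x y 5 = y - r by rewrite /Pt -/r /r; field.
have P6 : Pt x y 6 = y by rewrite /Pt; field.
have DE : Dq x y = st x y 1 - st x y 6.
  have P5' : Pt x y (6 - 1) = y - r by rewrite /Pt -/r /r; field.
  by rewrite /Dq /st P0 P1 P5' P6 -/r.
have s12 : st x y 2 <= st x y 1.
  rewrite /st; have -> : (2 - 1 : R) = 1 by ring. apply: sl_adj; rewrite /Pt -/r; [nra|nra|nra|nra].
have s56 : st x y 6 <= st x y 5.
  rewrite /st; have -> : (6 - 1 : R) = 5 by ring. apply: sl_adj; rewrite /Pt -/r; [nra|nra|nra|nra].
have g1 := @gen_step x y 1 ax xy yb (lexx _) ltac:(lra).
have g2 := @gen_step x y 2 ax xy yb ltac:(lra) ltac:(lra).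
have g3 := @gen_step x y 3 ax xy yb ltac:(lra) ltac:(lra).
have g4 := @gen_step x y 4 ax xy yb ltac:(lra) ltac:(lra).
have e12 : (1 + 1 : R) = 2 by ring. have e13 : (1 + 2 : R) = 3 by ring.
have e23 : (2 + 1 : R) = 3 by ring. have e24 : (2 + 2 : R) = 4 by ring.
have e34 : (3 + 1 : R) = 4 by ring. have e35 : (3 + 2 : R) = 5 by ring.
have e45 : (4 + 1 : R) = 5 by ring. have e46 : (4 + 2 : R) = 6 by ring.
rewrite e12 e13 in g1; rewrite e23 e24 in g2; rewrite e34 e35 in g3;
rewrite e45 e46 in g4.
rewrite /nxt /=.
case: ifP => [c1|c1]; first by case: g1 => *; split => //; lra.
case: ifP => [c2|c2]; first by case: g2 => *; split => //; lra.
case: ifP => [c3|c3]; first by case: g3 => *; split => //; lra.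
move/negbT: c1; move/negbT: c2; move/negbT: c3; rewrite -!ltNge => c3 c2 c1.
by case: g4 => *; split => //; lra.
Qed.

Variables x0 y0 : R.
Hypotheses (ax0 : a <= x0) (xy0 : x0 < y0) (yb0 : y0 <= b).

Definition brs n := iter n nxt (x0, y0).

Lemma brs_inv n : [/\ a <= (brs n).1, (brs n).1 < (brs n).2, (brs n).2 <= b &
   Dq (brs n).1 (brs n).2 * 2 ^+ n <= Dq x0 y0].
Proof.
elim: n => [|n [h1 h2 h3 h4]]; first by rewrite /= expr0 mulr1.
have -> : brs n.+1 = nxt (brs n) by [].
move: h1 h2 h3 h4; case: (brs n) => x y /= h1 h2 h3 h4.
have [k1 k2 k3 k4] := nxt_spec h1 h2 h3.
have r0 : 0 < (y - x) / 6 by rewrite divr_gt0 // subr_gt0.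
split; [lra|lra|lra|].
rewrite exprS; have p : 0 < 2 ^+ n :> R by rewrite exprn_gt0.
nra.
Qed.

Lemma brs_step n : (brs n).1 + ((brs n).2 - (brs n).1) / 6 <= (brs n.+1).1 /\
   (brs n.+1).2 <= (brs n).2 - ((brs n).2 - (brs n).1) / 6.
Proof.
have -> : brs n.+1 = nxt (brs n) by [].
have [h1 h2 h3 _] := brs_inv n.
move: h1 h2 h3; case: (brs n) => x y /= h1 h2 h3.
by have [k1 k2 k3 k4] := nxt_spec h1 h2 h3.
Qed.

Lemma brs_mono {n m} : (n <= m)%N -> (brs n).1 <= (brs m).1 /\ (brs m).2 <= (brs n).2.
Proof.
elim: m => [|m IH]; first by rewrite leqn0 => /eqP ->.
rewrite leq_eqVlt => /orP [/eqP -> //|]; rewrite ltnS => /IH [i1 i2].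
have [s1 s2] := brs_step m; have [_ h _ _] := brs_inv m.
have r0 : 0 < ((brs m).2 - (brs m).1) / 6 by rewrite divr_gt0 // subr_gt0.
split; lra.
Qed.

Definition wpt := sup (range (fun n => (brs n).1)).

Lemma wpt_bounds n : (brs n).1 + ((brs n).2 - (brs n).1) / 6 <= wpt /\
   wpt <= (brs n).2 - ((brs n).2 - (brs n).1) / 6.
Proof.
have [s1 s2] := brs_step n.
have ub : ubound (range (fun n => (brs n).1)) (brs n.+1).2.
  move=> _ [m _ <-].
  have [i1 _] := brs_mono (leq_maxl m n.+1).
  have [_ i2] := brs_mono (leq_maxr m n.+1).
  have [_ h _ _] := brs_inv (maxn m n.+1). lra.
split.
  apply: le_trans s1 _; apply: sup_upper_bound; last by exists n.+1.
  split; first by exists (brs 0).1, 0%N.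
  by exists (brs n.+1).2.
apply: le_trans s2; apply: ge_sup => //; by exists (brs 0).1, 0%N.
Qed.

Lemma wpt_in : x0 < wpt /\ wpt < y0.
Proof.
have [h1 h2] := wpt_bounds 0.
have r0 : 0 < (y0 - x0) / 6 by rewrite divr_gt0 // subr_gt0.
rewrite /= in h1 h2; split; lra.
Qed.

Lemma gap n : sl (brs n).1 wpt - sl wpt (brs n).2 <= Dq (brs n).1 (brs n).2.
Proof.
have [h1 h2] := wpt_bounds n; have [i1 i2 i3 _] := brs_inv n.
move: h1 h2 i1 i2 i3; case: (brs n) => x y /= h1 h2 i1 i2 i3.
set r := (y - x) / 6 in h1 h2 *.
have r0 : 0 < r by rewrite /r divr_gt0 // subr_gt0.
rewrite /Dq -/r.
have e1 : sl x wpt <= sl x (x + r).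
  have [->|lt] := eqVneq wpt (x + r); first by [].
  have lt' : x + r < wpt by rewrite lt_neqAle eq_sym lt h1.
  by have [] := @sl3 x (x + r) wpt i1 ltac:(lra) lt' ltac:(lra).
have e2 : sl (y - r) y <= sl wpt y.
  have [->|lt] := eqVneq wpt (y - r); first by [].
  have lt' : wpt < y - r by rewrite lt_neqAle lt h2.
  by have [] := @sl3 wpt (y - r) y ltac:(lra) lt' ltac:(lra) i3.
lra.
Qed.

Lemma gap_small e : 0 < e -> exists n, Dq (brs n).1 (brs n).2 < e.
Proof.
move=> e0; set D0 := Dq x0 y0.
have [m hm] : exists m : nat, D0 / e < m%:R.
  exists (Num.truncn (D0 / e)).+1; exact: Num.Theory.truncnS_gt.
exists m; have [_ _ _ h] := brs_inv m.
have h2 : (m%:R : R) <= 2 ^+ m.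
  by rewrite -natrX ler_nat ltnW // ltn_expl.
have p : 0 < 2 ^+ m :> R by rewrite exprn_gt0.
move: hm; rewrite ltr_pdivrMr // => hm.
rewrite -/D0 in h.
have h3 : Dq (brs m).1 (brs m).2 * 2 ^+ m < e * 2 ^+ m.
  apply: (le_lt_trans h); apply: (lt_le_trans hm); rewrite mulrC.
  by rewrite ler_pM2l.
by rewrite ltr_pM2r in h3.
Qed.

Definition lsl := sup [set sl wpt z | z in [set z | wpt < z <= b]].

Lemma lsl_ge {z} : wpt < z -> z <= b -> sl wpt z <= lsl.
Proof.
move=> wz zb; apply: sup_upper_bound; last by exists z => //=; apply/andP.
split; first by exists (sl wpt z), z => //=; apply/andP.
have [w1 w2] := wpt_in.
exists (sl x0 wpt) => _ [t /andP [t1 t2] <-].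
exact: sl_adj ax0 w1 t1 t2.
Qed.

Lemma lsl_le {u} : a <= u -> u < wpt -> lsl <= sl u wpt.
Proof.
move=> au uw; have [w1 w2] := wpt_in.
apply: ge_sup; first by exists (sl wpt y0), y0 => //=; rewrite w2 yb0.
move=> _ [t /andP [t1 t2] <-]; exact: sl_adj au uw t1 t2.
Qed.

Lemma lsl_cvg : (fun h : R => h^-1 *: (G (h + wpt) - G wpt)) @ (0 : R)^' --> (lsl : R).
Proof.
apply/cvgrPdist_lt => e e0.
have [n hn] := @gap_small e e0.
have hg := gap n.
have [i1 i2 i3 _] := brs_inv n.
have [h1 h2] := wpt_bounds n.
set x := (brs n).1 in hn hg i1 i2 i3 h1 h2; set y := (brs n).2 in hn hg i1 i2 i3 h1 h2.
have r0 : 0 < (y - x) / 6 by rewrite divr_gt0 // subr_gt0.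
have xw : x < wpt by lra.
have wy : wpt < y by lra.
have l1 := lsl_ge wy i3.
have l2 := lsl_le i1 xw.
have d0 : 0 < Num.min (wpt - x) (y - wpt) by rewrite lt_min !subr_gt0 xw wy.
apply: filterS2 (dnbhs0_lt d0) (nbhs_dnbhs_neq 0) => h hlt hne.
rewrite lt_min in hlt; case/andP: hlt => hl1 hl2.
have [hpos|hneg] := ltP 0 h.
- have ea : h^-1 *: (G (h + wpt) - G wpt) = sl wpt (h + wpt).
    by rewrite /sl addrK mulrC.
  rewrite gtr0_norm // in hl1 hl2.
  have q1 : sl wpt y <= sl wpt (h + wpt).
    by have [] := @sl3 wpt (h + wpt) y ltac:(lra) ltac:(lra) ltac:(lra) i3.
  have q2 : sl wpt (h + wpt) <= sl x wpt.
    exact: (@sl_adj x wpt (h + wpt) i1 xw ltac:(lra) ltac:(lra)).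
  rewrite ea ltr_norml; apply/andP; split; lra.
- have hn0 : h < 0 by rewrite lt_neqAle hne hneg.
  have ea : h^-1 *: (G (h + wpt) - G wpt) = sl (h + wpt) wpt.
    rewrite /sl; have -> : wpt - (h + wpt) = - h by ring.
    by rewrite invrN mulrN -mulNr opprB mulrC.
  rewrite ltr0_norm // in hl1 hl2.
  have q1 : sl wpt y <= sl (h + wpt) wpt.
    exact: (@sl_adj (h + wpt) wpt y ltac:(lra) ltac:(lra) wy i3).
  have q2 : sl (h + wpt) wpt <= sl x wpt.
    by have [] := @sl3 x (h + wpt) wpt i1 ltac:(lra) ltac:(lra) ltac:(lra).
  rewrite ea ltr_norml; apply/andP; split; lra.
Qed.

Lemma exists_deriv : exists w, [/\ x0 < w < y0, derivable G w 1,
  (forall u, a <= u -> u < w -> derive1 G w <= sl u w) &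
  (forall z, w < z -> z <= b -> sl w z <= derive1 G w)].
Proof.
have [w1 w2] := wpt_in.
have eqf : (fun h : R => h^-1 *: ((G \o shift wpt) (h *: (1:R)) - G wpt))
         = (fun h : R => h^-1 *: (G (h + wpt) - G wpt)).
  by apply: funext => h /=; rewrite /GRing.scale /= mulr1.
have dE : derive1 G wpt = lsl by apply: cvg_lim => //; exact: lsl_cvg.
exists wpt; split.
- by rewrite w1 w2.
- by rewrite /derivable eqf; apply: cvgP lsl_cvg.
- by move=> u au uw; rewrite dE; exact: lsl_le.
- by move=> z wz zb; rewrite dE; exact: lsl_ge.
Qed.
End Chord.

Section Main.
Variable R : realType.
Variables (gamma mu : R) (g : R -> \bar R) (L d v : R).
Hypotheses (hg0 : 0 < gamma) (hmu : 0 < mu).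
Hypothesis hwave : forall x, step gamma mu g x = g (x - v).
Hypothesis hconc : concaveE g.
Hypothesis hL : L <= 0.
Hypothesis hsupp : forall x : R, (0 <= g x)%E <-> L <= x <= 0.
Hypothesis hd : is_d g L d.

Local Notation s1 := (s_of gamma mu g).
Local Notation Sf x := (ereal_sup [set (g y - `|x - y|%:E)%E | y in [set: R]]).

Lemma PhiE xi x : Phi gamma mu xi g x =
  ((1 - gamma)%:E - mu%:E * maxe (xi - x%:E) 0 + Sf x)%E.
Proof. by []. Qed.

Lemma gE x : g x = Defs.piE (Phi gamma mu s1 g (x + v)).
Proof. by have := hwave (x + v); rewrite addrK => <-. Qed.

Lemma g_out x : ~ (L <= x <= 0) -> g x = -oo%E.
Proof.
move=> hx; rewrite gE /Defs.piE; case: ifP => // h.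
by exfalso; apply: hx; apply/hsupp; rewrite gE /Defs.piE h.
Qed.

Lemma s1_fin : s1 != +oo%E.
Proof.
apply/negP => /eqP hs.
have : (0 <= g 0)%E by apply/hsupp; rewrite lexx hL.
rewrite gE PhiE hs /=.
have -> : maxe (+oo%E : \bar R) 0 = +oo%E by [].
rewrite mulry gtr0_sg // mul1e /Defs.piE.
have -> : ((1 - gamma)%:E - +oo = -oo :> \bar R)%E by [].
by rewrite addNye.
Qed.

Definition mf z := match s1 with EFin r => mu * Num.max (r - z) 0 | _ => 0 end.

Lemma A_E (z : R) : ((1 - gamma)%:E - mu%:E * maxe (s1 - z%:E) 0 = (1 - gamma - mf z)%:E)%E.
Proof.
have := s1_fin; rewrite /mf; case: (s_of gamma mu g) => [r| |] hs.
- by rewrite -EFinB -EFin_max -EFinM -EFinB.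
- by rewrite eqxx in hs.
rewrite addNye.
rewrite maxEle leNye.
by rewrite mule0 sube0 subr0.
Qed.

Lemma mf_prop {z z' : R} : z <= z' -> mf z' <= mf z /\ mf z - mf z' <= mu * (z' - z).
Proof.
move=> zz; rewrite /mf; case: (s_of gamma mu g) => [r| |]; have hm := hmu; try by split; nra.
rewrite !maxEle; case: (leP (r - z) 0) => h1; case: (leP (r - z') 0) => h2; split; nra.
Qed.

Lemma Phi_s1 z : Phi gamma mu s1 g z = ((1 - gamma - mf z)%:E + Sf z)%E.
Proof. by rewrite PhiE A_E. Qed.

Lemma no_pinfty_S : ~ (forall z, Sf z = +oo%E).
Proof.
move=> H.
have : (0 <= g 1)%E -> False by move/hsupp => /andP[_]; lra.
apply; rewrite gE Phi_s1 H addey // /Defs.piE leey; exact: leey.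
Qed.

Lemma g_fin y : g y != +oo%E.
Proof.
apply/negP => /eqP gy; apply: no_pinfty_S => z.
apply/eqP; rewrite -leye_eq.
have := @ereal_sup_ubound _ [set (g y - `|z - y|%:E)%E | y in [set: R]] (g y - `|z - y|%:E)%E.
rewrite gy addye //; apply; by exists y => //; rewrite gy.
Qed.

Lemma Sf_lip z z' : (Sf z' <= Sf z + `|z - z'|%:E)%E.
Proof.
apply: ge_ereal_sup => _ [y _ <-].
have := g_fin y; case E: (g y) => [r| |] // _.
  have h1 : ((r - `|z - y|)%:E <= Sf z)%E.
    by apply: ereal_sup_ubound; exists y => //; rewrite E.
  apply: le_trans (leeD2r _ h1); rewrite -EFinB -EFinD lee_fin.
  have := ler_distD z' z y => h; lra.
by rewrite addNye leNye.
Qed.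

Lemma Sf_fin z : exists r, Sf z = r%:E.
Proof.
have g0 : (0 <= g 0)%E by apply/hsupp; rewrite lexx hL.
have := g_fin 0; case E0: (g 0) g0 => [r0| |] // g0 _.
have lb : ((r0 - `|z - 0|)%:E <= Sf z)%E.
  by apply: ereal_sup_ubound; exists 0 => //; rewrite E0.
case E: (Sf z) lb => [r| |] lb; first by exists r.
- exfalso; apply: no_pinfty_S => z'.
  have := Sf_lip z' z; rewrite E leye_eq.
  by case: (Sf z') => [r'| |].
- by rewrite leeNy_eq in lb.
Qed.

Definition Sr z := fine (Sf z).

Lemma SrE z : Sf z = (Sr z)%:E.
Proof. by rewrite /Sr; have [r ->] := Sf_fin z. Qed.

Lemma Sr_lip z z' : Sr z' <= Sr z + `|z - z'|.
Proof. by have := Sf_lip z z'; rewrite !SrE -EFinD lee_fin. Qed.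

Definition Ph z := 1 - gamma - mf z + Sr z.

Lemma gE2 y : g y = Defs.piE (Ph (y + v))%:E.
Proof. by rewrite gE Phi_s1 SrE -EFinD. Qed.

Lemma g_in {y} : L <= y <= 0 -> g y = (Ph (y + v))%:E /\ 0 <= Ph (y + v).
Proof.
move=> hy; have := hsupp y; rewrite gE2 /Defs.piE.
case: ifP => [h _|h [_ /(_ hy)]]; last by rewrite leeNy_eq.
by split => //; rewrite -lee_fin.
Qed.

Lemma Ph_out {y} : ~ (L <= y <= 0) -> Ph (y + v) < 0.
Proof.
move=> hy; rewrite ltNge; apply/negP => h; apply: hy; apply/hsupp.
by rewrite gE2 /Defs.piE lee_fin h.
Qed.

Lemma Ph_P1 {z z'} : z' <= z -> Ph z' <= Ph z + (z - z').
Proof.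
move=> hz; have [m1 _] := mf_prop hz.
have := Sr_lip z z'; rewrite ger0_norm ?subr_ge0 // /Ph => h; lra.
Qed.

Lemma Ph_P2 {z z'} : z <= z' -> Ph z' <= Ph z + (1 + mu) * (z' - z).
Proof.
move=> hz; have [_ m2] := mf_prop hz.
have := Sr_lip z z'; rewrite ler0_norm ?subr_le0 // /Ph => h; lra.
Qed.

Definition G y := fine (g y).

Lemma G_in {y} : L <= y <= 0 -> g y = (G y)%:E /\ G y = Ph (y + v) /\ 0 <= G y.
Proof. by move=> hy; have [e h] := g_in hy; rewrite /G e /=. Qed.
Lemma G_P1 {y y'} : L <= y' -> y' <= y -> y <= 0 -> G y' <= G y + (y - y').
Proof.
move=> h1 h2 h3.
have [_ [-> _]] := @G_in y' ltac:(apply/andP; split; lra).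
have [_ [-> _]] := @G_in y ltac:(apply/andP; split; lra).
have := @Ph_P1 (y + v) (y' + v) ltac:(lra). move=> h; lra.
Qed.

Lemma G_P2 {y y'} : L <= y -> y <= y' -> y' <= 0 -> G y' <= G y + (1 + mu) * (y' - y).
Proof.
move=> h1 h2 h3.
have [_ [-> _]] := @G_in y' ltac:(apply/andP; split; lra).
have [_ [-> _]] := @G_in y ltac:(apply/andP; split; lra).
have := @Ph_P2 (y + v) (y' + v) ltac:(lra).
have -> : y' + v - (y + v) = y' - y by ring. move=> h; lra.
Qed.

Lemma G0 : G 0 = 0.
Proof.
have hL' := hL.
have [_ [e0 p0]] := @G_in 0 ltac:(apply/andP; split; lra).
rewrite add0r in e0.
apply/eqP; rewrite eq_le p0 andbT; apply/negP => /negP; rewrite -ltNge => pos.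
have := @Ph_out (G 0) ltac:(move=> /andP [_]; lra).
have := @Ph_P1 (G 0 + v) v ltac:(lra).
move=> h1 h2; lra.
Qed.

Lemma G_le_neg {y} : L <= y -> y <= 0 -> G y <= - y.
Proof. by move=> h1 h2; have := @G_P1 0 y h1 h2 (lexx _); rewrite G0; lra. Qed.

Lemma Gcc x y z : L <= x -> x < y -> y < z -> z <= 0 ->
  G x * (z - y) + G z * (y - x) <= G y * (z - x).
Proof.
move=> h1 h2 h3 h4.
have zx : 0 < z - x by lra.
set t := (z - y) / (z - x).
have t0 : 0 < t by rewrite /t divr_gt0 // subr_gt0.
have t1 : t < 1 by rewrite /t ltr_pdivrMr // mul1r; lra.
have := hconc x z; move=> /(_ t); rewrite t0 t1 /= => /(_ isT).
have -> : t * x + (1 - t) * z = y by rewrite /t; field; lra.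
have [-> _] := @G_in x ltac:(apply/andP; split; lra).
have [-> _] := @G_in z ltac:(apply/andP; split; lra).
have [-> _] := @G_in y ltac:(apply/andP; split; lra).
rewrite -!EFinM -EFinD lee_fin => h.
have -> : G x * (z - y) + G z * (y - x) = (t * G x + (1 - t) * G z) * (z - x).
  by rewrite /t; field; lra.
by rewrite ler_pM2r.
Qed.

Lemma B1 {x y} : L <= x -> d <= x -> x < y -> y <= 0 -> G y - G x <= y - x.
Proof.
move=> h1 h2 h3 h4; rewrite leNgt; apply/negP => hD.
have hm := hmu.
set D := G y - G x - (y - x).
have D0 : 0 < D by rewrite /D; lra.
have DE : D = G y - G x - (y - x) by [].
have [x' [x1 x2 x3]] : exists x', [/\ x < x', x' < y & y - x' < G y - G x'].
  case: (ltP (mu * (y - x) / 2) D) => hc.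
    exists ((x + y) / 2); split; try lra.
    have := @G_P2 x ((x + y) / 2) h1 ltac:(lra) ltac:(lra); move=> ?; nra.
  set k := D / (2 * mu).
  have hk : 2 * mu * k = D by rewrite /k; field; lra.
  have k0 : 0 < k by nra.
  exists (x + k); split; try nra.
  have := @G_P2 x (x + k) h1 ltac:(lra) ltac:(nra); move=> ?; nra.
have [w [/andP [w1 w2] wder _ wge]] :=
  @exists_deriv R G L 0 Gcc x x' h1 x1 ltac:(lra).
have sy : sl R G w y <= derive1 G w := wge y ltac:(lra) h4.
have [_ s2] := @sl3 R G L 0 Gcc w x' y ltac:(lra) w2 x2 h4.
have s1' : 1 < sl R G x' y by rewrite /sl ltr_pdivlMr ?mul1r; lra.
have [H1 _] : _ /\ _ := hd.
have Pw : L < w < 0 by apply/andP; split; lra.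
have dw : 1 < derive1 G w by lra.
have [_ _ H3] := H1 (ex_intro _ w (conj Pw (conj wder dw))).
have := H3 w ltac:(lra) wder; move=> ?; lra.
Qed.

Lemma C1 {y} : L <= y -> y < d -> d - y <= G d - G y /\ L < d < 0.
Proof.
move=> h1 h2.
have [H1 H2] : _ /\ _ := hd.
have [P|nP] := pselect (exists x, L < x < 0 /\ derivable G x 1 /\ 1 < derive1 G x);
  last by have := H2 nP; lra.
have [/andP [Ld d0] Hlt _] := H1 P.
split; last by rewrite Ld d0.
rewrite leNgt; apply/negP => hD.
set dG := G d - G y.
have dGE : dG = G d - G y by [].
have [y' [y1 y2 y3]] : exists y', [/\ y < y', y' < d & G y' - G y < y' - y].
  have P1 := fun y' => @G_P1 d y'.
  case: (lerP ((dG + d + y) / 2) y) => hc.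
    exists ((y + d) / 2); split; try lra.
    have := @G_P1 d ((y + d) / 2) ltac:(lra) ltac:(lra) ltac:(lra); move=> ?; lra.
  exists (((dG + d + y) / 2 + d) / 2); split; try lra.
  have := @G_P1 d (((dG + d + y) / 2 + d) / 2) ltac:(lra) ltac:(lra) ltac:(lra).
  move=> ?; lra.
have [w [/andP [w1 w2] wder wle _]] :=
  @exists_deriv R G L 0 Gcc y' d ltac:(lra) y2 ltac:(lra).
have sy : derive1 G w <= sl R G y w := wle y h1 ltac:(lra).
have [s1' _] := @sl3 R G L 0 Gcc y y' w h1 y1 w1 ltac:(lra).
have s2 : sl R G y y' < 1 by rewrite /sl ltr_pdivrMr ?mul1r; lra.
have := Hlt w ltac:(apply/andP; split; lra) wder; move=> ?; lra.
Qed.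

Lemma Sf_val x c : (forall y, L <= y <= 0 -> G y - `|x - y| <= c) ->
  (exists2 y0, L <= y0 <= 0 & G y0 - `|x - y0| = c) -> Sf x = c%:E.
Proof.
move=> hub [y0 hy0 e0]; apply/le_anti/andP; split.
  apply: ge_ereal_sup => _ [y _ <-].
  case hy: (L <= y <= 0).
    have [-> _] := G_in hy; rewrite -EFinB lee_fin; exact: hub.
  by rewrite g_out ?hy // addNye leNye.
apply: ereal_sup_ubound; exists y0 => //.
by have [-> _] := G_in hy0; rewrite -EFinB e0.
Qed.

Lemma nrm1 (x y : R) : y - x <= `|x - y|.
Proof. by rewrite distrC; exact: ler_norm. Qed.
Lemma nrm2 (x y : R) : x - y <= `|x - y|.
Proof. exact: ler_norm. Qed.

Lemma SA {x} : 0 < x -> Sf x = (- x)%:E.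
Proof.
move=> x0; have hL' := hL; apply: Sf_val.
  move=> y /andP [h1 h2]; have := G_le_neg h1 h2.
  rewrite ger0_norm; [move=> ?; lra | lra].
exists 0; first by rewrite lexx hL.
by rewrite G0 subr0 gtr0_norm // sub0r.
Qed.

Lemma SB {x} : L <= x -> d <= x -> x <= 0 -> Sf x = (G x)%:E.
Proof.
move=> h1 h2 h3; apply: Sf_val.
  move=> y /andP [y1 y2].
  case: (lerP y x) => hyx.
    have := G_P1 y1 hyx h3; move=> ?; lra.
  have := B1 h1 h2 hyx y2; move=> ?; lra.
by exists x; [rewrite h1 h3 | rewrite subrr normr0 subr0].
Qed.

Lemma SC {x} : L <= x -> x < d -> Sf x = (G d - (d - x))%:E /\ L <= d <= 0.
Proof.
move=> h1 h2; have [_ /andP [Ld d0]] := C1 h1 h2.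
split; last by rewrite (ltW Ld) (ltW d0).
apply: Sf_val.
  move=> y /andP [y1 y2]; have := nrm1 x y; move=> n1.
  case: (ltP y d) => hyd.
    have [c _] := C1 y1 hyd; lra.
  have : G y - G d <= y - d.
    case: (eqVneq y d) => [->|ne]; first by rewrite !subrr.
    apply: B1 => //; [exact: ltW | by rewrite lt_neqAle eq_sym ne hyd].
  move=> ?; lra.
exists d; first by rewrite (ltW Ld) (ltW d0).
by rewrite ltr0_norm ?subr_lt0 // opprB.
Qed.

Lemma ee (a c : R) (M : \bar R) : ((a%:E - M) + c%:E = (a + c)%:E - M)%E.
Proof.
case: M => [r| |].
- by rewrite -!EFinB -!EFinD; congr EFin; ring.
- by rewrite !addeNy /= addNye.
- by rewrite /= !addey.
Qed.

Lemma main_sec (s : \bar R) x : L <= x ->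
    [/\ 0 < x -> Phi gamma mu s g x
                  = ((1 - gamma - x)%:E - mu%:E * maxe (s - x%:E) 0%E)%E,
        d <= x <= 0 -> Phi gamma mu s g x
                  = ((1 - gamma)%:E + g x - mu%:E * maxe (s - x%:E) 0%E)%E &
        x < d -> Phi gamma mu s g x
                  = ((1 - gamma)%:E + g d - (d - x)%:E
                     - mu%:E * maxe (s - x%:E) 0%E)%E].
Proof.
move=> hx; split.
- by move=> x0; rewrite PhiE SA // ee.
- move=> /andP [h1 h2]; rewrite PhiE SB // ee.
  by have [-> _] := @G_in x ltac:(by rewrite hx h2); rewrite -EFinD.
- move=> h; have [e /andP [Ld d0]] := SC hx h.
  rewrite PhiE e ee.
  have [-> _] := @G_in d ltac:(by rewrite Ld d0).
  by rewrite -EFinD addrA.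
Qed.
End Main.

Theorem corollaryS3p3 (R : realType) (gamma mu : R) (g : R -> \bar R) (L d : R) :
  0 < gamma < 1 -> 0 < mu -> mu != 1 ->
  (exists v : R, traveling_wave gamma mu g v) ->
  concaveE g ->
  L <= 0 ->
  (forall x : R, (0 <= g x)%E <-> L <= x <= 0) ->
  is_d g L d ->
  let s := s_crit gamma mu g in
  forall x : R, L <= x ->
    [/\ 0 < x -> Phi gamma mu s g x
                  = ((1 - gamma - x)%:E - mu%:E * maxe (s - x%:E) 0%E)%E,
        d <= x <= 0 -> Phi gamma mu s g x
                  = ((1 - gamma)%:E + g x - mu%:E * maxe (s - x%:E) 0%E)%E &
        x < d -> Phi gamma mu s g x
                  = ((1 - gamma)%:E + g d - (d - x)%:E
                     - mu%:E * maxe (s - x%:E) 0%E)%E].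
Proof.
move=> _ hmu _ [v hw] hconc hL hsupp hd s x hx.
have hwave : forall y, step gamma mu g y = g (y - v).
  by move=> y; have := hw 1%N y; rewrite /gseq /= mul1r.
exact: (@main_sec R gamma mu g L d v hmu hwave hconc hL hsupp hd s x hx).
Qed.
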